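(* Let $A$ be a graded algebra and $G\le\mathrm{GrAut}\,A$ a subgroup. For every $r\ge1$, $A^{[r]}*G\cong(A*G)^{[r]}$ as graded algebras.
   Context: Graded algebras are $\mathbb{N}$-graded algebras over an algebraically closed field $k$. For a graded vector space $V$, $V^{(r)}=\bigoplus_{n\in\mathbb{Z}}V_{rn}$ with degree $n$ part $V_{rn}$, and $V(j)_m=V_{j+m}$. The $r$-th quasi-Veronese algebra $A^{[r]}$ is the $r\times r$ matrix algebra (indices $0,\dots,r-1$) whose $(i,j)$ entry is $A(j-i)^{(r)}$, with multiplication $(a_{ij})(b_{ij})=(\sum_{k=0}^{r-1}a_{kj}b_{ik})$. $G$ acts on $A^{[r]}$ entrywise: $g((a_{ij}))=(g(a_{ij}))$. The skew group algebra $B*G=B\otimes_kkG$ has multiplication $(a*g)(b*h)=ag(b)*gh$, graded by $B$. *)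

(* Defs.v *)
From HB Require Import structures.
From mathcomp Require Import all_boot all_order all_algebra.
From mathcomp Require Import boolp classical_sets cardinality fsbigop.

Set Implicit Arguments.
Unset Strict Implicit.
Unset Printing Implicit Defensive.

Import GRing.Theory.
Local Open Scope ring_scope.

(* Conventions.  A (possibly constructed) graded algebra is presented by an   *)
(* ambient type [gT], a carrier predicate [gmem] (the elements of the         *)
(* algebra), its k-algebra operations, and the predicate [gdeg n x] meaning   *)
(* "x is homogeneous of degree n" (i.e. x lies in the degree-n component).    *)
(* [gdeg n x] is always meant to imply [gmem x].                              *)
Record gAlg (k : Type) := GAlg {
  gT : Type;
  gmem : gT -> Prop;
  gadd : gT -> gT -> gT;
  gzero : gT;
  gscale : k -> gT -> gT;
  gmul : gT -> gT -> gT;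
  gone : gT;
  gdeg : nat -> gT -> Prop }.
Arguments gT {k} g.
Arguments gmem {k} g _.
Arguments gadd {k} g _ _.
Arguments gzero {k} g.
Arguments gscale {k} g _ _.
Arguments gmul {k} g _ _.
Arguments gone {k} g.
Arguments gdeg {k} g _ _.

Definition galg_iso (k : Type) (X Y : gAlg k) (f : gT X -> gT Y) : Prop :=
  (forall x, gmem X x -> gmem Y (f x)) /\
  (forall x y, gmem X x -> gmem X y -> f x = f y -> x = y) /\
  (forall y, gmem Y y -> exists2 x, gmem X x & f x = y) /\
  (forall x y, gmem X x -> gmem X y -> f (gadd X x y) = gadd Y (f x) (f y)) /\
  (forall c x, gmem X x -> f (gscale X c x) = gscale Y c (f x)) /\
  (forall x y, gmem X x -> gmem X y -> f (gmul X x y) = gmul Y (f x) (f y)) /\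
  f (gone X) = gone Y /\
  (forall n x, gmem X x -> (gdeg X n x <-> gdeg Y n (f x))).

Section GradedAlgebra.
Variables (k : fieldType) (A : algType k).

(* [Ad n] is the degree-n component A_n of an N-grading A = (+)_n A_n.        *)
Definition is_grading (Ad : nat -> A -> Prop) : Prop :=
  (forall n, Ad n 0) /\
  (forall n a b, Ad n a -> Ad n b -> Ad n (a + b)) /\
  (forall n (c : k) a, Ad n a -> Ad n (c *: a)) /\
  (forall a, exists N (f : nat -> A),
      (forall d, Ad d (f d)) /\ a = \sum_(d < N) f d) /\
  (forall N (f : nat -> A), (forall d, Ad d (f d)) ->
      \sum_(d < N) f d = 0 -> forall d, (d < N)%N -> f d = 0) /\
  (forall m n a b, Ad m a -> Ad n b -> Ad (m + n) (a * b)) /\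
  Ad 0 1.

Definition alg_of (Ad : nat -> A -> Prop) : gAlg k :=
  @GAlg k A (fun _ => True) +%R 0 *:%R *%R 1 Ad.

Definition is_grAut (Ad : nat -> A -> Prop) (phi : A -> A) : Prop :=
  (forall a b, phi (a + b) = phi a + phi b) /\
  (forall (c : k) a, phi (c *: a) = c *: phi a) /\
  (forall a b, phi (a * b) = phi a * phi b) /\
  phi 1 = 1 /\
  bijective phi /\
  (forall n a, Ad n a <-> Ad n (phi a)).

(* G <= GrAut A : a group G together with a faithful action of G on A by    *)
(* graded algebra automorphisms (identifying G with its image in GrAut A).  *)
Definition is_GrAut_subgroup (Ad : nat -> A -> Prop) (G : groupType)
    (act : G -> A -> A) : Prop :=
  (forall g, is_grAut Ad (act g)) /\
  (forall g h a, act (g * h)%g a = act g (act h a)) /\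
  (forall g h, act g =1 act h -> g = h).

End GradedAlgebra.

Section Constructions.
Variable k : Type.

Section QuasiVeronese.
Variables (B : gAlg k) (r : nat).

(* b lies in B(j-i)^(r) = (+)_{n in Z} B_{rn+j-i}, i.e. b is a sum of        *)
(* homogeneous elements of degrees d with d = j - i (mod r).                 *)
Definition in_qver_entry (i j : 'I_r) (b : gT B) : Prop :=
  exists N (f : nat -> gT B), (forall d, gdeg B d (f d)) /\
    b = \big[gadd B/gzero B]_(d < N | (d + i == j %[mod r])%N) f d.

(* b lies in the degree-n part of B(j-i)^(r), namely B_{rn+j-i}             *)
(* (which is 0 when rn+j-i < 0).                                             *)
Definition qver_entry_deg (n : nat) (i j : 'I_r) (b : gT B) : Prop :=
  if (i <= r * n + j)%N then gdeg B (r * n + j - i) b else b = gzero B.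

Definition qver : gAlg k :=
  @GAlg k 'M[gT B]_r
    (fun M => forall i j, in_qver_entry i j (M i j))
    (fun M N => \matrix_(i, j) gadd B (M i j) (N i j))
    (\matrix_(i, j) gzero B)
    (fun c M => \matrix_(i, j) gscale B c (M i j))
    (fun M N => \matrix_(i, j) \big[gadd B/gzero B]_(l < r) gmul B (M l j) (N i l))
    (\matrix_(i, j) if i == j then gone B else gzero B)
    (fun n M => forall i j, qver_entry_deg n i j (M i j)).

Definition qver_act (G : Type) (act : G -> gT B -> gT B) (g : G)
    (M : 'M[gT B]_r) : 'M[gT B]_r :=
  \matrix_(i, j) act g (M i j).

End QuasiVeronese.

(* Elements are finitely supported functions x : G -> B, standing for the    *)
(* finite formal sum  sum_g x(g) * g.                                         *)
Section Skew.
Variables (B : gAlg k) (G : groupType) (act : G -> gT B -> gT B).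

Local Open Scope classical_set_scope.

Definition skew_mem (x : G -> gT B) : Prop :=
  (forall g, gmem B (x g)) /\ finite_set [set g | x g <> gzero B].

Definition skew_group_alg : gAlg k :=
  @GAlg k (G -> gT B)
    skew_mem
    (fun x y g => gadd B (x g) (y g))
    (fun _ => gzero B)
    (fun c x g => gscale B c (x g))
    (* (a*g)(b*h) = a g(b) * gh *)
    (fun x y h => \big[gadd B/gzero B]_(g \in [set: G])
                     gmul B (x g) (act g (y (g^-1 * h)%g)))
    (fun g => if g == 1%g then gone B else gzero B)
    (fun n x => skew_mem x /\ forall g, gdeg B n (x g)).

End Skew.
End Constructions.

Arguments qver_act {k} B r {G} act g M.
Arguments skew_group_alg {k} B {G} act.
Arguments qver {k} B r.
Arguments galg_iso {k} X Y f.

(* Main.v *)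
Require Import Defs.
From HB Require Import structures.
From mathcomp Require Import all_boot all_order all_algebra.
From mathcomp Require Import finmap boolp classical_sets cardinality fsbigop.

Set Implicit Arguments.
Unset Strict Implicit.
Unset Printing Implicit Defensive.
Import GRing.Theory.

Section Helpers.
Local Open Scope classical_set_scope.
Local Open Scope ring_scope.

Lemma fin_seq (T : eqType) (P : set T) :
  finite_set P <-> exists s : seq T, forall t, P t -> t \in s.
Proof.
split.
  by move=> /finite_seqP [s ->]; exists s.
move=> [s Hs]; apply: (sub_finite_set (B := [set` s])) => //.
Qed.

Lemma fsbig_seqE (R : zmodType) (T : choiceType) (op : R -> R -> R) (idx : R)
  (F : T -> R) (s : seq T) :
  (forall a b, op a b = a + b) -> idx = 0 ->
  (forall t, F t != 0 -> t \in s) ->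
  \big[op/idx]_(t \in [set: T]) F t = \sum_(t <- undup s) F t.
Proof.
move=> Hop -> Hs.
have -> : op = +%R by apply/funext=> a; apply/funext=> b; exact: Hop.
rewrite (fsbigTE (seq_fset tt s)); last first.
  by move=> i; rewrite seq_fsetE; apply: contraNeq => /Hs.
by apply: perm_big; apply: seq_fset_perm.
Qed.

Lemma big_eval (I T : Type) (R : zmodType) (s : seq I) (P : pred I)
  (F : I -> T -> R) (t : T) :
  (\big[(fun x y g => x g + y g)/(fun=> 0)]_(i <- s | P i) F i) t
  = \sum_(i <- s | P i) F i t.
Proof.
elim: s => [|a s IH]; first by rewrite !big_nil.
by rewrite !big_cons; case: (P a) => //=; rewrite IH.
Qed.

Lemma fin_sum (R : zmodType) (T I : Type) (s : seq I) (P : pred I)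
  (F : I -> T -> R) :
  (forall i, finite_set [set t | F i t <> 0]) ->
  finite_set [set t | \sum_(i <- s | P i) F i t <> 0].
Proof.
move=> HF; elim: s => [|a s IH].
  by apply: (sub_finite_set (B := set0)) => // t /=; rewrite big_nil.
apply: (sub_finite_set (B := [set t | F a t <> 0] `|` [set t | \sum_(i <- s | P i) F i t <> 0])).
  move=> t /=; rewrite big_cons; case: (P a) => H.
    apply: contra_notP H => /not_orP [/contrapT -> /contrapT ->]; exact: addr0.
  by right.
by rewrite finite_setU; split.
Qed.

End Helpers.

Local Open Scope ring_scope.

Theorem lemma2p29 (k : closedFieldType) (A : algType k) (Ad : nat -> A -> Prop)
    (gradedA : is_grading Ad)
    (G : groupType) (act : G -> A -> A) (HG : is_GrAut_subgroup Ad act)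
    (r : nat) (hr : (1 <= r)%N) :
  exists f, galg_iso (skew_group_alg (qver (alg_of Ad) r) (qver_act (alg_of Ad) r act))
                     (qver (skew_group_alg (alg_of Ad) act) r) f.
Proof.
exists (fun x : G -> 'M[A]_r => (\matrix_(i, j) (fun g => x g i j))%R).
split; [|split; [|split; [|split; [|split; [|split; [|split]]]]]].
all: rewrite /=.
- move=> x [xm /fin_seq [S HS]] i j.
  have Hx : forall g, g \notin S -> x g i j = 0.
    move=> g gS; have : x g = \matrix_(_, _) 0.
      apply/eqP/negPn/negP => /eqP H; have := HS g H; by rewrite (negbTE gS).
    by move=> ->; rewrite mxE.
  pose Q := fun g (p : nat * (nat -> A)) =>
      (forall d, Ad d (p.2 d)) /\
      x g i j = \sum_(d < p.1 | (d + i == j %[mod r])%N) p.2 d.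
  have [e He] : {e : G -> nat * (nat -> A) & forall g, Q g (e g)}.
    apply: choice => g; have [N [F [HF E]]] := xm g i j.
    by exists (N, F); split.
  pose N := (\max_(g <- S) (e g).1)%N.
  exists N, (fun d g => if (g \in S) && (d < (e g).1)%N then (e g).2 d else 0).
  split.
    move=> d; split; last first.
      move=> g /=; case: ifP => _; first exact: (He g).1.
      by case: gradedA.
    split => //; apply: (sub_finite_set (B := [set` S])) => // g /=.
    by case: ifP => // /andP [].
  rewrite mxE; apply/funext => h; rewrite /=.
  apply: esym; apply: etrans (big_eval _ _ _ _) _ => /=.
  case hS: (h \in S); last first.
    by rewrite Hx ?hS //; apply: big1 => d _.
  have [_ ->] := He h.
  have mN : ((e h).1 <= N)%N by rewrite /N; apply: leq_bigmax_seq.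
  rewrite (big_ord_widen_cond N (fun d => (d + i == j %[mod r])%N) (fun d => (e h).2 d) mN) big_mkcondr /=.
  by apply: eq_bigr => d _.
- move=> x y _ _ E; apply/funext => g; apply/matrixP => i j.
  by have /matrixP/(_ i j) := E; rewrite !mxE => /(congr1 (fun u => u g)).
- move=> y H.
  exists (fun g => \matrix_(i, j) y i j g); last first.
    by apply/matrixP => i j; rewrite !mxE; apply/funext => g; rewrite mxE.
  split.
    move=> g i j; have [N [F [HF E]]] := H i j.
    exists N, (fun d => F d g); split; first by move=> d; exact: (HF d).2.
    by rewrite mxE E /=; apply: big_eval.
  have Hy : forall i j, finite_set [set g | y i j g <> 0].
    move=> i j; have [N [F [HF E]]] := H i j.
    apply: (sub_finite_set (B := [set t | \sum_(d < N | (d + i == j %[mod r])%N) F d t <> 0])).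
      move=> t /= Hne H0; apply: Hne; rewrite E; exact: etrans (big_eval _ _ _ _) H0.
    by apply: fin_sum => d; exact: (HF d).1.2.
  apply: (sub_finite_set (B := (\bigcup_(p in [set: 'I_r * 'I_r]) [set g | y p.1 p.2 g <> 0])%classic)).
    move=> g /= Hne; apply: contrapT => Hn; apply: Hne; apply/matrixP => i j.
    rewrite !mxE; apply: contrapT => Hij; apply: Hn; exists (i, j) => //.
  by apply: bigcup_finite => // p _; exact: Hy.
- move=> x y _ _; apply/matrixP => i j; rewrite !mxE; apply/funext => g.
  by rewrite !mxE.
- move=> c x _; apply/matrixP => i j; rewrite !mxE; apply/funext => g.
  by rewrite !mxE.
- move=> x y [_ /fin_seq [S HS]] _.
  have Hx : forall g, g \notin S -> forall l j, x g l j = 0.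
    move=> g gS l j; have : x g = \matrix_(_, _) 0.
      apply/eqP/negPn/negP => /eqP H; have := HS g H; by rewrite (negbTE gS).
    by move=> ->; rewrite mxE.
  apply/matrixP => i j; rewrite !mxE; apply/funext => h.
  rewrite (@fsbig_seqE _ _ _ _ _ S); first last.
  - move=> t; apply: contraNT => tS; apply/eqP/matrixP => a b; rewrite !mxE.
    by apply: big1 => l _; rewrite Hx // mul0r.
  - by apply/matrixP => a b; rewrite !mxE.
  - by move=> a b; apply/matrixP => a' b'; rewrite !mxE.
  rewrite summxE big_eval.
  under eq_bigr => g _ do rewrite mxE.
  rewrite exchange_big /=; apply: eq_bigr => l _.
  rewrite (@fsbig_seqE _ _ _ _ _ S) //; last first.
    move=> t; apply: contraNT => tS; rewrite !mxE Hx // mul0r //.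
  by apply: eq_bigr => g _; rewrite !mxE.
- apply/matrixP => i j; rewrite !mxE; apply/funext => g.
  have [->|ne] := eqVneq g 1%g; rewrite ?eqxx ?(negbTE ne) mxE;
    case: (i == j) => //=; rewrite ?eqxx ?(negbTE ne) //.
- move=> n x [xm xf].
  have Ef : forall i j, skew_mem (B:=alg_of Ad) (fun g => x g i j).
    move=> i j; split => //; apply: sub_finite_set xf => g /= Hne E; apply: Hne.
    by rewrite E mxE.
  split.
  + move=> [_ H] i j; rewrite mxE /qver_entry_deg /=.
    have {}H := fun g => H g i j; rewrite /qver_entry_deg in H.
    case: ifP => c; rewrite c in H.
      by split; [exact: Ef | move=> g; exact: H g].
    by apply/funext => g; exact: H g.
  + move=> H; split => // g i j; have := H i j; rewrite mxE /qver_entry_deg /=.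
    case: ifP => _; first by case=> _ /(_ g).
    by move/(congr1 (fun u => u g)).
Qed.
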